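(* Let $A$ be a ring, $M$ a left $A$-module, $W$ a multiplicative subset of $A$, $V$ a multiplicative submonoid of the center $Z(A)$ of $A$, and $S$ a subset of $M$. Then $G^{W,V}_M(S)$ is the smallest $V$-regular $W$-factroid of $M$ containing $S$.
   Context: Rings are unital, not necessarily commutative. A $W$-factroid of $M$ is an additive subgroup $F$ of $M$ such that for all $x\in M$ and $w\in W$, $wx\in F$ implies $x\in F$; for $X\subseteq M$, $[X]^W_M$ is the smallest $W$-factroid of $M$ containing $X$. For $h\in A$ and $X\subseteq M$, $hX=\{hx\mid x\in X\}$. For $T\subseteq A$, a $W$-factroid $F$ of $M$ is $T$-regular if for all $h\in T$ and $x\in M$, $hx\in[hF]^W_M$ implies $x\in F$. $G^{W,V}_M(S):=\{x\in M\mid hx\in[hS]^W_M \text{ for some } h\in V\}$. *)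

(* Defs.v *)
(* Rings: pzRingType (unital, not necessarily commutative,
   zero ring allowed); modules: lmodType A (left A-modules).
   Subsets are Prop-valued predicates. *)
From mathcomp Require Import all_boot all_order all_algebra.
Set Implicit Arguments. Unset Strict Implicit. Unset Printing Implicit Defensive.
Import GRing.Theory.
Local Open Scope ring_scope.

Section Factroids.
Variables (A : pzRingType) (M : lmodType A).

Definition additive_subgroup (F : M -> Prop) : Prop :=
  F 0 /\ (forall x y, F x -> F y -> F (x - y)).

Definition factroid (W : A -> Prop) (F : M -> Prop) : Prop :=
  additive_subgroup F /\ (forall (x : M) (w : A), W w -> F (w *: x) -> F x).

Definition factroid_closure (W : A -> Prop) (X : M -> Prop) : M -> Prop :=
  fun x => forall F : M -> Prop, factroid W F -> (forall y, X y -> F y) -> F x.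

Definition smul_set (h : A) (X : M -> Prop) : M -> Prop :=
  fun y => exists2 x, X x & y = h *: x.

Definition regular (W T : A -> Prop) (F : M -> Prop) : Prop :=
  factroid W F /\
  (forall (h : A) (x : M), T h ->
     factroid_closure W (smul_set h F) (h *: x) -> F x).

Definition Gset (W V : A -> Prop) (S : M -> Prop) : M -> Prop :=
  fun x => exists2 h, V h & factroid_closure W (smul_set h S) (h *: x).

End Factroids.

Definition multiplicative {A : pzRingType} (W : A -> Prop) : Prop :=
  W 1 /\ (forall a b, W a -> W b -> W (a * b)).

Definition central {A : pzRingType} (a : A) : Prop := forall b : A, a * b = b * a.

Definition central_submonoid {A : pzRingType} (V : A -> Prop) : Prop :=
  (forall a, V a -> central a) /\ V 1 /\ (forall a b, V a -> V b -> V (a * b)).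

(* Main.v *)
Require Import Defs.
From mathcomp Require Import all_boot all_order all_algebra.

Set Implicit Arguments. Unset Strict Implicit.
Local Open Scope ring_scope.

Module Aux0.
Import GRing.Theory.
Section Aux.
Variables (A : pzRingType) (M : lmodType A) (W : A -> Prop).

Lemma cl_factroid (X : M -> Prop) : factroid W (factroid_closure W X).
Proof.
split; [split|].
- by move=> F [[F0 _] _] _.
- by move=> x y Hx Hy F HF HX; case: (HF) => [[_ FB] _]; apply: FB; [apply: Hx|apply: Hy].
- move=> x w Hw Hx F HF HX; case: (HF) => [_ Fw]; apply: (Fw x w Hw); exact: Hx.
Qed.

Lemma cl_sub (X : M -> Prop) x : X x -> factroid_closure W X x.
Proof. by move=> Xx F _ H; apply: H. Qed.

Lemma cl_mono (X Y : M -> Prop) : (forall x, X x -> Y x) ->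
  forall x, factroid_closure W X x -> factroid_closure W Y x.
Proof. by move=> XY x Hx F HF HY; apply: Hx => // y /XY; apply: HY. Qed.

Lemma cl_scale (h : A) (X : M -> Prop) x : central h ->
  factroid_closure W X x -> factroid_closure W (smul_set h X) (h *: x).
Proof.
move=> ch Hx.
pose P := fun z : M => factroid_closure W (smul_set h X) (h *: z).
have [[C0 CB] Cw] := cl_factroid (smul_set h X).
apply: (Hx P).
- split; [split|].
  + by rewrite /P scaler0.
  + by move=> a b Ha Hb; rewrite /P scalerBr; apply: CB.
  + move=> z w Hw; rewrite /P scalerA ch -scalerA => Hz; exact: (Cw _ w Hw).
- by move=> y Xy; apply: cl_sub; exists y.
Qed.

Lemma smul_smul (k h c : A) (X : M -> Prop) : c = k * h ->
  forall x, smul_set k (smul_set h X) x -> smul_set c X x.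
Proof. by move=> -> x [y [z Xz ->] ->]; exists z; rewrite // scalerA. Qed.

Lemma factroid_ext (F G : M -> Prop) : (forall x, F x <-> G x) ->
  factroid W F -> factroid W G.
Proof.
move=> E [[F0 FB] Fw]; split; [split|].
- by apply/E.
- by move=> x y /E Hx /E Hy; apply/E; apply: FB.
- by move=> x w Hw /E Hx; apply/E; apply: (Fw x w).
Qed.

Definition Q (V : A -> Prop) (S : M -> Prop) (a : A) : M -> Prop :=
  fun z => exists2 k, V k & factroid_closure W (smul_set (k * a) S) (k *: z).

Lemma Q_factroid V S a : central_submonoid V -> factroid W (Q V S a).
Proof.
move=> [Vc [V1 VM]]; split; [split|].
- by exists 1 => //; rewrite scaler0; case: (cl_factroid (smul_set (1 * a) S)) => [[]].
- move=> x y [k1 V1k H1] [k2 V2k H2]; exists (k1 * k2); first exact: VM.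
  have [[_ CB] _] := cl_factroid (smul_set (k1 * k2 * a) S).
  rewrite scalerBr; apply: CB.
  + rewrite (Vc _ V1k) -scalerA.
    apply: cl_mono (cl_scale (Vc _ V2k) H1) => z; apply: smul_smul.
    by rewrite !mulrA.
  + rewrite -scalerA.
    apply: cl_mono (cl_scale (Vc _ V1k) H2) => z; apply: smul_smul.
    by rewrite !mulrA.
- move=> x w Hw [k Vk H]; exists k => //.
  have [_ Cw] := cl_factroid (smul_set (k * a) S).
  apply: (Cw _ w Hw); by rewrite scalerA -(Vc _ Vk) -scalerA.
Qed.

End Aux.
End Aux0.
Import Aux0.

Theorem proposition6p13 (A : pzRingType) (M : lmodType A)
  (W V : A -> Prop) (S : M -> Prop) :
  multiplicative W -> central_submonoid V ->
  [/\ regular W V (Gset W V S),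
      (forall x, S x -> Gset W V S x) &
      (forall F : M -> Prop, regular W V F -> (forall x, S x -> F x) ->
         forall x, Gset W V S x -> F x)].
Proof.
move=> _ HV; have [Vc [V1 VM]] := HV.
have EG : forall x, @Q _ M W V S 1 x <-> Gset W V S x.
  by move=> x; split => -[k Vk H]; exists k; rewrite ?GRing.mulr1 // in H *.
split.
- split; first exact: (factroid_ext EG (@Q_factroid _ _ W V S 1 HV)).
  move=> h x Vh Hx.
  have HQ : forall z, factroid_closure W (smul_set h (Gset W V S)) z -> @Q _ M W V S h z.
    move=> z Hz; apply: Hz; first exact: Q_factroid.
    move=> y [u [k Vk Hu] ->]; exists k => //.
    have -> : k *: (h *: u) = h *: (k *: u) by rewrite !GRing.scalerA (Vc _ Vk).
    apply: cl_mono (cl_scale (Vc _ Vh) Hu) => t; apply: smul_smul.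
    exact: Vc.
  have [k Vk Hk] := HQ _ Hx.
  exists (k * h); first exact: VM.
  by rewrite -GRing.scalerA.
- move=> x Sx; exists 1 => //; apply: cl_sub; exists x => //.
- move=> F [_ FR] SF x [h Vh Hx]; apply: (FR h x Vh).
  apply: cl_mono Hx => y [z Sz ->]; exists z => //; exact: SF.
Qed.
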